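(* Let $d\ge1$ be an integer, $c\in[0,\tfrac12)$, $\alpha>1$, and $p\in(0,\tfrac12]$. Let $P$ be the distribution on $[0,1]^d$ placing mass $p$ on the point $(c,\dots,c)$ and mass $1-p$ on $(1-c,\dots,1-c)$, and let $Q$ place mass $1-p$ on $(c,\dots,c)$ and mass $p$ on $(1-c,\dots,1-c)$. Let $K=e^{-2(1/2-c)^2 d}$. If $p+K\le\tfrac12$, then $R_\alpha(\mathrm{Bern}(P),\mathrm{Bern}(Q))\ge r_\alpha(p+K)$.
   Context: For distributions $P,Q$ and $\alpha>1$, $R_\alpha(P,Q)=\frac{1}{\alpha-1}\log\int (dP/dQ)^\alpha\,dQ$ is the Rényi divergence of order $\alpha$. For $p\in[0,1]$, $r_\alpha(p)=\frac{1}{\alpha-1}\log\left(p^\alpha(1-p)^{1-\alpha}+(1-p)^\alpha p^{1-\alpha}\right)$, the Rényi divergence between the two-point distributions $(p,1-p)$ and $(1-p,p)$. For $x\in[0,1]^d$, $\mathrm{Bern}(x)$ is the random vector in $\{0,1\}^d$ with independent coordinates, coordinate $i$ equal to $1$ with probability $x_i$; for a distribution $P$ on $[0,1]^d$, $\mathrm{Bern}(P)$ is the distribution of $\mathrm{Bern}(X)$ with $X\sim P$. *)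

(* Defs.v *)
From HB Require Import structures.
From mathcomp Require Import all_boot all_order all_algebra.
From mathcomp Require Import all_classical all_reals all_analysis.
Set Implicit Arguments. Unset Strict Implicit. Unset Printing Implicit Defensive.
Import Order.TTheory GRing.Theory Num.Theory.
Local Open Scope ring_scope.

(* Probability mass function of Bern(x) on {0,1}^d (represented as {ffun 'I_d -> bool}):
   independent coordinates, coordinate i equal to 1 (true) with probability x i. *)
Definition bern_pmf (R : realType) (d : nat) (x : 'I_d -> R)
    (y : {ffun 'I_d -> bool}) : R :=
  \prod_(i < d) (if y i then x i else 1 - x i).

(* Bern(P) for a finitely supported distribution P on [0,1]^d, given as a list of
   (mass, point) pairs: the pmf of Bern(X) with X ~ P. *)
Definition bern_mix (R : realType) (d : nat) (s : seq (R * ('I_d -> R)))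
    (y : {ffun 'I_d -> bool}) : R :=
  \sum_(wx <- s) wx.1 * bern_pmf wx.2 y.

(* Rényi divergence of order alpha > 1 between two distributions on a finite set,
   given by their pmfs: (1/(alpha-1)) log \int (dP/dQ)^alpha dQ, which is +oo when
   P is not absolutely continuous w.r.t. Q. *)
Definition renyi_fin (R : realType) (T : finType) (alpha : R) (P Q : T -> R) : \bar R :=
  if [exists y, (P y != 0) && (Q y == 0)] then +oo%E
  else ((alpha - 1)^-1 *
        ln (\sum_(y | Q y != 0) (P y `^ alpha * Q y `^ (1 - alpha))))%:E.

(* r_alpha(p): Rényi divergence between (p,1-p) and (1-p,p). *)
Definition r_alpha (R : realType) (alpha p : R) : R :=
  (alpha - 1)^-1 *
  ln (p `^ alpha * (1 - p) `^ (1 - alpha) + (1 - p) `^ alpha * p `^ (1 - alpha)).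

(* Main.v *)
Require Import Defs.
From HB Require Import structures.
From mathcomp Require Import all_boot all_order all_algebra.
From mathcomp Require Import all_classical all_reals all_analysis.
From mathcomp Require Import ring lra.
Import Order.TTheory GRing.Theory Num.Theory.
Local Open Scope ring_scope.


Section An.
Context {R : realType}.
Variable a : R.
Hypothesis a1 : 1 < a.

Lemma convP (l x y : R) : 0 <= l -> l <= 1 -> 0 <= x -> 0 <= y ->
  (l * x + (1 - l) * y) `^ a <= l * x `^ a + (1 - l) * y `^ a.
Proof.
move=> l0 l1 x0 y0.
have := @convex_powR R a (ltW a1) (Itv01 l0 l1) x y.
rewrite !inE /= !in_itv /= !andbT => /(_ x0 y0).
by rewrite !convRE /=.
Qed.

Definition phi (x y : R) := x `^ a * y `^ (1 - a).

Lemma phi_hom k x y : 0 < k -> 0 <= x -> 0 <= y -> phi (k * x) (k * y) = k * phi x y.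
Proof.
move=> k0 x0 y0; rewrite /phi !powRM ?(ltW k0) //.
rewrite mulrACA -powRD; last by rewrite (gt_eqF k0) implybT.
by rewrite addrC subrK powRr1 ?(ltW k0).
Qed.

Lemma phi1 t : phi t 1 = t `^ a.
Proof. by rewrite /phi powR1 mulr1. Qed.

Lemma phiE x y : 0 <= x -> 0 < y -> phi x y = y * (x / y) `^ a.
Proof.
move=> x0 y0; rewrite -phi1 -phi_hom ?divr_ge0 ?(ltW y0) //.
by rewrite mulr1 mulrC divfK ?gt_eqF.
Qed.

Lemma phi_sub x1 x2 y1 y2 : 0 <= x1 -> 0 <= x2 -> 0 < y1 -> 0 < y2 ->
  phi (x1 + x2) (y1 + y2) <= phi x1 y1 + phi x2 y2.
Proof.
move=> x10 x20 y10 y20.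
have Y0 : 0 < y1 + y2 by rewrite addr_gt0.
rewrite phiE ?addr_ge0 // (phiE _ _ x10 y10) (phiE _ _ x20 y20).
have hl : 1 - y1 / (y1 + y2) = y2 / (y1 + y2).
  by field; rewrite gt_eqF.
have -> : (x1 + x2) / (y1 + y2) = y1 / (y1 + y2) * (x1 / y1) + (1 - y1 / (y1 + y2)) * (x2 / y2).
  by rewrite hl; field; rewrite !gt_eqF.
set A := (x1 / y1) `^ a; set B := (x2 / y2) `^ a.
have -> : y1 * A + y2 * B = (y1 + y2) * (y1 / (y1 + y2) * A + (1 - y1 / (y1 + y2)) * B).
  by rewrite hl; field; rewrite gt_eqF.
rewrite ler_pM2l //; apply: convP; rewrite ?divr_ge0 ?(ltW y10) ?(ltW y20) ?(ltW Y0) //.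
by rewrite ler_pdivrMr // mul1r lerDl ltW.
Qed.

Definition psi x y := phi x y + phi y x.

Lemma psi_sub x1 x2 y1 y2 : 0 < x1 -> 0 < x2 -> 0 < y1 -> 0 < y2 ->
  psi (x1 + x2) (y1 + y2) <= psi x1 y1 + psi x2 y2.
Proof.
move=> *; rewrite /psi addrACA lerD // phi_sub // ltW //.
Qed.

Lemma psi_hom k x y : 0 < k -> 0 <= x -> 0 <= y -> psi (k * x) (k * y) = k * psi x y.
Proof. by move=> *; rewrite /psi !phi_hom // mulrDr. Qed.

Lemma psiC x y : psi x y = psi y x.
Proof. by rewrite /psi addrC. Qed.


Lemma psi_mono u v : 0 < u -> u <= v -> v <= 1/2 -> psi v (1 - v) <= psi u (1 - u).
Proof.
move=> u0 uv v2.
have [<-|uv'] := eqVneq u v; first by [].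
have ltuv : u < v by rewrite lt_neqAle uv' uv.
set l := (1 - u - v) / (1 - 2 * u).
have d0 : 0 < 1 - 2 * u by lra.
have l0 : 0 < l by rewrite /l divr_gt0 //; lra.
have l1 : 0 < 1 - l.
  by rewrite /l subr_gt0 ltr_pdivrMr // mul1r; lra.
have ev : v = l * u + (1 - l) * (1 - u) by rewrite /l; field; lra.
have ev' : 1 - v = l * (1 - u) + (1 - l) * u by rewrite /l; field; lra.
clearbody l; rewrite {1}ev ev'.
apply: le_trans; first by apply: psi_sub; apply: mulr_gt0 => //; lra.
rewrite !psi_hom //; try lra.
by rewrite (psiC (1 - u)) -mulrDl subrKC mul1r.
Qed.

Lemma psi_ge0 x y : 0 <= psi x y.
Proof. by rewrite /psi /phi addr_ge0 // mulr_ge0 // powR_ge0. Qed.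

Definition Kp X Y Z := (X = 0 /\ Y = 0 /\ 0 <= Z) \/ (0 < X /\ 0 < Y /\ psi X Y <= Z).

Lemma psi_big (I : finType) (P : pred I) (x y : I -> R) :
  (forall i, P i -> 0 < x i /\ 0 < y i) ->
  Kp (\sum_(i | P i) x i) (\sum_(i | P i) y i) (\sum_(i | P i) psi (x i) (y i)).
Proof.
move=> H; apply: (big_ind3 Kp); first by left.
  move=> x1 x2 x3 y1 y2 y3 [[-> [-> z1]]|[h1 [h2 h3]]] [[-> [-> z2]]|[k1 [k2 k3]]].
  - by left; rewrite addr0; split => //; split => //; exact: addr_ge0.
  - by right; rewrite !add0r; split=> //; split=> //; rewrite (le_trans k3) // lerDr.
  - by right; rewrite !addr0; split=> //; split=> //; rewrite (le_trans h3) // lerDl.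
  - right; split; first exact: addr_gt0.
    split; first exact: addr_gt0.
    apply: le_trans; first exact: psi_sub.
    exact: lerD.
move=> i /H [h1 h2]; right; split=> //.
Qed.

End An.
Section Bern.
Context {R : realType} {d : nat}.

Lemma mixE (p q : R) (f g : 'I_d -> R) y :
  bern_mix [:: (p, f); (q, g)] y = p * bern_pmf f y + q * bern_pmf g y.
Proof. by rewrite /bern_mix !big_cons big_nil addr0. Qed.

Lemma pmf_ge0 (x : 'I_d -> R) y : (forall i, 0 <= x i <= 1) -> 0 <= bern_pmf x y.
Proof.
move=> h; apply: prodr_ge0 => i _; have /andP[h0 h1] := h i.
by case: (y i) => //; rewrite subr_ge0.
Qed.

Lemma pmf_sum (x : 'I_d -> R) : \sum_y bern_pmf x y = 1.
Proof.
rewrite /bern_pmf.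
have := bigA_distr_bigA (fun (i : 'I_d) (j : bool) => if j then x i else 1 - x i).
move=> <-; rewrite big1 // => i _.
by rewrite big_bool /= addrC subrK.
Qed.

Definition cpl (y : {ffun 'I_d -> bool}) : {ffun 'I_d -> bool} := [ffun i => ~~ y i].

Lemma cplK : involutive cpl.
Proof. by move=> y; apply/ffunP => i; rewrite !ffunE negbK. Qed.

Lemma pmf_cpl (x : 'I_d -> R) y : bern_pmf x (cpl y) = bern_pmf (fun i => 1 - x i) y.
Proof.
apply: eq_bigr => i _; rewrite ffunE; case: (y i) => //=.
by rewrite opprB addrC subrK.
Qed.

Lemma pmf_AB (c : R) y : bern_pmf (fun _ : 'I_d => c) y * bern_pmf (fun _ : 'I_d => 1 - c) y = (c * (1 - c)) ^+ d.
Proof.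
rewrite /bern_pmf -big_split /=.
rewrite (eq_bigr (fun _ => c * (1 - c))); last first.
  by move=> i _; case: (y i) => /=; ring.
by rewrite prodr_const card_ord.
Qed.

End Bern.

Theorem theorem2 (R : realType) (d : nat) (c alpha p : R) :
  (1 <= d)%N -> 0 <= c -> c < 1 / 2 -> 1 < alpha -> 0 < p -> p <= 1 / 2 ->
  p + expR (- (2 * (1 / 2 - c) ^+ 2 * d%:R)) <= 1 / 2 ->
  ((r_alpha alpha (p + expR (- (2 * (1 / 2 - c) ^+ 2 * d%:R))))%:E <=
   renyi_fin alpha
     (bern_mix [:: (p, fun _ : 'I_d => c); (1 - p, fun _ : 'I_d => 1 - c)])
     (bern_mix [:: (1 - p, fun _ : 'I_d => c); (p, fun _ : 'I_d => 1 - c)]))%O.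
Proof.
move=> d1 c0 c2 a1 p0 p2.
set K := expR _ => hv.
set v := p + K.
pose A y := bern_pmf (fun _ : 'I_d => c) y.
pose B y := bern_pmf (fun _ : 'I_d => 1 - c) y.
have -> : bern_mix [:: (p, fun _ : 'I_d => c); (1 - p, fun _ : 'I_d => 1 - c)] =
   fun y => p * A y + (1 - p) * B y by apply: boolp.funext => y; rewrite mixE.
have -> : bern_mix [:: (1 - p, fun _ : 'I_d => c); (p, fun _ : 'I_d => 1 - c)] =
   fun y => (1 - p) * A y + p * B y by apply: boolp.funext => y; rewrite mixE.
set P := fun y => p * A y + (1 - p) * B y.
set Q := fun y => (1 - p) * A y + p * B y.
have K0 : 0 < K by exact: expR_gt0.
have p1 : 0 < 1 - p by clear -p2; lra.
have A0 y : 0 <= A y.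
  by apply: pmf_ge0 => i; apply/andP; split=> //; clear -c2; lra.
have B0 y : 0 <= B y.
  by apply: pmf_ge0 => i; apply/andP; split; clear -c2 c0; lra.
have P0 y : 0 <= P y by rewrite /P addr_ge0 // mulr_ge0 // ltW.
have Q0 y : 0 <= Q y by rewrite /Q addr_ge0 // mulr_ge0 // ltW.
have PQ0 y : (P y == 0) = (Q y == 0).
  rewrite /P /Q !paddr_eq0 ?mulr_ge0 ?(ltW p0) ?(ltW p1) //.
  by rewrite !mulf_eq0 !(gt_eqF p0) !(gt_eqF p1) /= andbC.
rewrite /renyi_fin.
have -> : [exists y, (P y != 0) && (Q y == 0)] = false.
  by apply/negbTE/existsP => -[y /andP[h1 h2]]; rewrite PQ0 h2 in h1.
rewrite lee_fin /r_alpha ler_pM2l ?invr_gt0 ?subr_gt0 //.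
set T := \sum_(y | Q y != 0) _.
have v0 : 0 < v by rewrite addr_gt0.
have v1 : 0 < 1 - v by clear -hv; rewrite /v; lra.
have F0 : 0 < psi alpha v (1 - v).
  by rewrite /psi /phi addr_gt0 // mulr_gt0 // powR_gt0.
suff H : psi alpha v (1 - v) <= T.
  by rewrite ler_ln // posrE (lt_le_trans F0 H).
have hA y : A (cpl y) = B y by rewrite /A pmf_cpl.
have hB y : B (cpl y) = A y.
  by rewrite /B pmf_cpl; apply: eq_bigr => i _; rewrite opprB addrC subrK.
have Pc y : P (cpl y) = Q y by rewrite /P /Q hA hB addrC.
have Qc y : Q (cpl y) = P y by rewrite /P /Q hA hB addrC.
have T2 : T = \sum_(y | Q y != 0) phi alpha (Q y) (P y).
  rewrite /T (reindex_inj (can_inj cplK)) /=.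
  by apply: eq_big => [y|y _]; rewrite ?Qc ?Pc -?PQ0.
have T2' : 2 * T = \sum_(y | Q y != 0) psi alpha (Num.min (P y) (Q y)) (Num.max (P y) (Q y)).
  rewrite mulr_natl mulr2n {1}T2 /T -big_split /=.
  apply: eq_bigr => y _; rewrite /psi.
  by have [h|h] := leP (P y) (Q y); rewrite // addrC.
have pos y : Q y != 0 -> 0 < Num.min (P y) (Q y) /\ 0 < Num.max (P y) (Q y).
  move=> hQ; have hP : P y != 0 by rewrite PQ0.
  have hP' : 0 < P y by rewrite lt0r hP P0.
  have hQ' : 0 < Q y by rewrite lt0r hQ Q0.
  by have [h|h] := leP (P y) (Q y).
have := @psi_big R alpha a1 _ (fun y => Q y != 0) (fun y => Num.min (P y) (Q y)) (fun y => Num.max (P y) (Q y)) pos.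
rewrite -T2'.
set X := \sum_(y | Q y != 0) Num.min _ _.
set Y := \sum_(y | Q y != 0) Num.max _ _.
have sP : \sum_y P y = 1.
  by rewrite /P big_split /= -!mulr_sumr /A /B !pmf_sum !mulr1 subrKC.
have sQ : \sum_y Q y = 1.
  by rewrite /Q big_split /= -!mulr_sumr /A /B !pmf_sum !mulr1 subrK.
have XY : X + Y = 2.
  rewrite /X /Y -big_split /=.
  rewrite (eq_bigr (fun y => P y + Q y)); last first.
    by move=> y _; have [h|h] := leP (P y) (Q y); rewrite // addrC.
  rewrite big_mkcond /=.
  rewrite (eq_bigr (fun y => P y + Q y)); last first.
    move=> y _; case: ifP => // /negbFE /eqP hQ.
    have hP : P y = 0 by apply/eqP; rewrite PQ0 hQ.
    by rewrite hP hQ addr0.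
  by rewrite big_split /= sP sQ.
have sA : \sum_y A y = 1 by rewrite /A pmf_sum.
have sB : \sum_y B y = 1 by rewrite /B pmf_sum.
set S := \sum_y Num.min (A y) (B y).
have S0 : 0 <= S by apply: sumr_ge0 => y _; rewrite le_min A0 B0.
have XS : X <= 2 * p + (1 - 2 * p) * S.
  apply: (@le_trans _ _ (\sum_y Num.min (P y) (Q y))).
    rewrite [X in _ <= X](bigID (fun y => Q y != 0)) /= lerDl.
    by apply: sumr_ge0 => y _; rewrite le_min P0 Q0.
  apply: (@le_trans _ _ (\sum_y (p * (A y + B y) + (1 - 2 * p) * Num.min (A y) (B y)))).
    apply: ler_sum => y _; rewrite /P /Q.
    have [h|h] := leP (A y) (B y); rewrite ge_min; apply/orP.
      by right; rewrite le_eqVlt; apply/orP; left; apply/eqP; ring.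
    by left; rewrite le_eqVlt; apply/orP; left; apply/eqP; ring.
  rewrite big_split /= -!mulr_sumr big_split /= sA sB.
  rewrite -/S; by rewrite le_eqVlt; apply/orP; left; apply/eqP; ring.
have SK : S <= K.
  have mb y : Num.min (A y) (B y) <= K / 2 ^+ d.
    have m0 : 0 <= Num.min (A y) (B y) by rewrite le_min A0 B0.
    rewrite -ler_sqr ?nnegrE ?divr_ge0 ?exprn_ge0 ?(ltW K0) //.
    apply: (@le_trans _ _ (A y * B y)).
      by rewrite expr2 ler_pM // ge_min lexx ?orbT.
    rewrite /A /B pmf_AB.
    have e : (K / 2 ^+ d) ^+ 2 = (expR (- (4 * (1/2 - c)^+2)) / 4) ^+ d.
      rewrite !expr_div_n; congr (_ / _).
        by rewrite /K -!expRM_natr; congr expR; ring.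
      by rewrite -exprM mulnC exprM; congr (_ ^+ _); ring.
    rewrite e ler_pXn2r ?nnegrE //; last by rewrite mulr_ge0 //; clear -c2; lra.
    rewrite ler_pdivlMr //; apply: le_trans (expR_ge1Dx _).
    by rewrite le_eqVlt; apply/orP; left; apply/eqP; field.
  apply: (@le_trans _ _ (\sum_(y : {ffun 'I_d -> bool}) K / 2 ^+ d)); first exact: ler_sum.
  rewrite sumr_const card_ffun card_bool card_ord -(mulr_natr (K / 2 ^+ d)) natrX divfK //.
have X2 : X <= 2 * v.
  have h : 0 <= p * S by rewrite mulr_ge0 // ltW.
  rewrite /v; clear -XS SK h K0; nra.
case => [[X0 [Y0 _]] | [X0 [Y0 HX]]].
  have : (0:R) = 2 by rewrite -XY X0 Y0 addr0.
  by clear; lra.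
set u := X / 2.
have Xu : X = 2 * u by rewrite /u mulrC divfK.
have Yu : Y = 2 * (1 - u) by apply: (addrI X); rewrite XY /u; field.
rewrite Xu Yu psi_hom in HX; last 3 first.
- by [].
- by rewrite /u divr_ge0 // ltW.
- have hX : X <= 2 by rewrite -XY lerDl ltW.
  by rewrite subr_ge0 /u ler_pdivrMr // mul1r.
rewrite ler_pM2l // in HX.
apply: le_trans HX; apply: psi_mono => //.
- by rewrite /u divr_gt0.
- by rewrite /u ler_pdivrMr // mulrC.
Qed.
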